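(* Let $I$ be a finite set, $\tau$ a total order of $I$, and $A,B$ set compositions of $I$ with $\mathrm{Asc}(A)\subseteq\tau$. Then, as maps $\mathsf{cf}(\mathrm{UL}(\tau,A))\to\mathsf{cf}(\mathrm{UL}(\tau,B))$, $$\mathrm{Resf}^{\mathrm{UT}(\tau)}_{\mathrm{UL}(\tau,B)}\circ\mathrm{Inf}^{\mathrm{UT}(\tau)}_{\mathrm{UL}(\tau,A)}=\Big(\bigotimes_{j=1}^{\ell(B)}\mathrm{Inf}^{\mathrm{UT}(\tau|_{B_j})}_{\mathrm{UL}(\tau|_{B_j},A|_{B_j})}\Big)\circ\Big(\bigotimes_{i=1}^{\ell(A)}\mathrm{Resf}^{\mathrm{UT}(\tau|_{A_i})}_{\mathrm{UL}(\tau|_{A_i},B|_{A_i})}\Big),$$ where the intermediate space $\mathsf{cf}(\mathrm{UL}(\tau,A\wedge B))=\mathsf{cf}(\mathrm{UL}(\tau,B\wedge A))$ is identified with both $\bigotimes_i\mathsf{cf}(\mathrm{UL}(\tau|_{A_i},B|_{A_i}))$ and $\bigotimes_j\mathsf{cf}(\mathrm{UL}(\tau|_{B_j},A|_{B_j}))$.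
   Context: Fix the finite field $\mathbb{F}_q$. For a finite set $I$, $\mathrm{GL}(I)$ is the group of invertible $I\times I$ matrices over $\mathbb{F}_q$ with identity $1_I$. A total order $\tau$ of $I$ is a reflexive, antisymmetric, transitive, total relation $\tau\subseteq I\times I$; $\tau|_J=\tau\cap(J\times J)$. For a relation $\pi$ containing the diagonal, $\mathrm{UT}(\pi)=\{X\in\mathrm{GL}(I):(X-1_I)_{i,j}\ne0\text{ only if }(i,j)\in\pi\}$. A set composition $A=(A_1,\dots,A_\ell)$ of $I$ is a sequence of pairwise disjoint nonempty sets with union $I$; for $J\subseteq I$, $C|_J$ is $(C_1\cap J,\dots)$ with empty sets removed; the Tits product is $A\wedge B=B|_{A_1}\cdots B|_{A_{\ell(A)}}$ (concatenation). $\mathrm{Asc}(A)=\bigsqcup_{r<s}A_r\times A_s$, $\mathrm{Eq}(A)=\bigsqcup_rA_r\times A_r$. $\mathrm{UL}(\tau,A)=\mathrm{UT}(\tau\cap\mathrm{Eq}(A))$, $\mathrm{UR}(\tau,A)=\mathrm{UT}(\{(i,i)\}\cup(\tau\cap\mathrm{Asc}(A)))$, $\mathrm{UP}(\tau,A)=\mathrm{UT}(\tau\cap(\mathrm{Eq}(A)\cup\mathrm{Asc}(A)))=\mathrm{UL}(\tau,A)\ltimes\mathrm{UR}(\tau,A)$; if $\mathrm{Asc}(A)\subseteq\tau$ then $\mathrm{UP}(\tau,A)=\mathrm{UT}(\tau)$. $\mathrm{UL}(\tau,A)=\mathrm{UT}(\tau|_{A_1})\oplus\cdots\oplus\mathrm{UT}(\tau|_{A_\ell})$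 (block diagonal), so $\mathsf{cf}(\mathrm{UL}(\tau,A))\cong\bigotimes_i\mathsf{cf}(\mathrm{UT}(\tau|_{A_i}))$; also $\mathrm{UL}(\tau,A\wedge B)=\mathrm{UL}(\tau,A)\cap\mathrm{UL}(\tau,B)=\mathrm{UL}(\tau,B\wedge A)$. $\mathsf{cf}(G)$ is the space of complex class functions on $G$. For $\mathrm{UT}(\tau)=\mathrm{UL}(\tau,A)\ltimes\mathrm{UR}(\tau,A)$, $\mathrm{Inf}^{\mathrm{UT}(\tau)}_{\mathrm{UL}(\tau,A)}\psi(lr)=\psi(l)$. $\mathrm{Resf}^{\mathrm{UT}(\tau)}_{\mathrm{UL}(\tau,B)}=\mathrm{Def}^{\mathrm{UP}(\tau,B)}_{\mathrm{UL}(\tau,B)}\circ\mathrm{Res}^{\mathrm{UT}(\tau)}_{\mathrm{UP}(\tau,B)}$ with $\mathrm{Def}^{\mathrm{UP}(\tau,B)}_{\mathrm{UL}(\tau,B)}\psi(g)=\frac1{|\mathrm{UR}(\tau,B)|}\sum_{x\in\mathrm{UR}(\tau,B)}\psi(gx)$. *)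

(* Defs.v *)
From HB Require Import structures.
From mathcomp Require Import all_boot all_order all_algebra.
From mathcomp Require Import algC.
Set Implicit Arguments. Unset Strict Implicit. Unset Printing Implicit Defensive.
Import GRing.Theory Num.Theory.
Local Open Scope ring_scope.

(* The finite set I is 'I_n; matrices I x I over the finite field F are 'M[F]_n.
   Class functions take values in algC (complex algebraic numbers). *)

Notation Mx F n := 'M[F]_n.

Definition total_order (n : nat) (tau : rel 'I_n) : Prop :=
  [/\ reflexive tau, antisymmetric tau, transitive tau & total tau].

Definition rrestr (n : nat) (tau : rel 'I_n) (J : {set 'I_n}) : rel 'I_n :=
  fun i j => [&& tau i j, i \in J & j \in J].

Definition is_setcomp (n : nat) (J : {set 'I_n}) (A : seq {set 'I_n}) : bool :=
  [&& all (fun a => a != set0) A,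
      pairwise (fun a b : {set 'I_n} => [disjoint a & b]) A &
      \bigcup_(a <- A) a == J].

Definition crestr (n : nat) (C : seq {set 'I_n}) (J : {set 'I_n}) : seq {set 'I_n} :=
  [seq c :&: J | c <- C & c :&: J != set0].

Definition tits (n : nat) (A B : seq {set 'I_n}) : seq {set 'I_n} :=
  flatten [seq crestr B a | a <- A].

Definition eqrel (n : nat) (A : seq {set 'I_n}) : rel 'I_n :=
  fun i j => has (fun a : {set 'I_n} => (i \in a) && (j \in a)) A.

Definition ascrel (n : nat) (A : seq {set 'I_n}) : rel 'I_n :=
  fun i j => [exists r : 'I_(size A), exists s : 'I_(size A),
     [&& (r < s)%N, i \in nth set0 A r & j \in nth set0 A s]].

(* For pi = tau|_J this is UT(tau|_J)
   embedded in GL(I) as X |-> X (+) 1_{I \ J}. *)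
Definition UT (F : finFieldType) (n : nat) (pi : rel 'I_n) : {set Mx F n} :=
  [set X : Mx F n | [&& X \in unitmx,
     [forall i, X i i == 1] &
     [forall i, forall j, ((i != j) && (X i j != 0)) ==> pi i j]]].

Definition UL (F : finFieldType) (n : nat) (tau : rel 'I_n) (A : seq {set 'I_n}) :=
  UT F (fun i j => tau i j && eqrel A i j).

Definition UR (F : finFieldType) (n : nat) (tau : rel 'I_n) (A : seq {set 'I_n}) :=
  UT F (fun i j => (i == j) || (tau i j && ascrel A i j)).

(* Complex-valued functions on matrices; a class function on G is one
   invariant under G-conjugation (only its values on G matter). *)
Definition cfun (F : finFieldType) (n : nat) := Mx F n -> algC.

Definition is_classfun (F : finFieldType) (n : nat) (G : {set Mx F n})
    (psi : cfun F n) : Prop :=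
  forall g x, g \in G -> x \in G -> psi (invmx g *m x *m g) = psi x.

Definition infl (F : finFieldType) (n : nat) (L R : {set Mx F n})
    (psi : cfun F n) : cfun F n :=
  fun g => match [pick p : Mx F n * Mx F n |
                   [&& p.1 \in L, p.2 \in R & p.1 *m p.2 == g]] with
           | Some p => psi p.1
           | None => 0
           end.

Definition resf (F : finFieldType) (n : nat) (R : {set Mx F n})
    (psi : cfun F n) : cfun F n :=
  fun g => (#|R|%:R)^-1 * \sum_(x in R) psi (g *m x).

Definition delta (F : finFieldType) (n : nat) (g : Mx F n) : cfun F n :=
  fun x => (x == g)%:R.

Definition blk (F : finFieldType) (n : nat) (J : {set 'I_n}) (X : Mx F n) : Mx F n :=
  \matrix_(i, j) if (i \in J) && (j \in J) then X i j else (i == j)%:R.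

(* Tensor product of linear maps f_J (one for each block J of the set
   composition Js), acting on cf(G) ~ (x)_J cf(G_J), where G is the
   block-diagonal group identified with prod_J G_J via g |-> (blk J g)_J.
   Written in the basis of delta functions:
   ((x)_J f_J) Phi (h) = sum_{g in G} (prod_J f_J(delta_{g_J})(h_J)) Phi(g). *)
Definition tensor_map (F : finFieldType) (n : nat) (Js : seq {set 'I_n})
    (f : {set 'I_n} -> cfun F n -> cfun F n) (G : {set Mx F n})
    (Phi : cfun F n) : cfun F n :=
  fun h => \sum_(g in G) (\prod_(J <- Js) f J (delta (blk J g)) (blk J h)) * Phi g.

(* Main.v *)
Require Import Defs.
From HB Require Import structures.
From mathcomp Require Import all_boot all_order all_algebra.
From mathcomp Require Import algC.
From mathcomp Require Import zify.
Require Import Defs.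
Import GRing.Theory Num.Theory.
Local Open Scope ring_scope.
Set Implicit Arguments. Unset Strict Implicit. Unset Printing Implicit Defensive.


Lemma sum_neq0 (R : nmodType) (I : finType) (P : pred I) (f : I -> R) :
  \sum_(k | P k) f k != 0 -> exists2 k, P k & f k != 0.
Proof.
move=> nz; apply/exists_inP; apply: contraNT nz => /exists_inPn h.
by apply/eqP; apply: big1 => k Pk; apply/eqP; move: (h k Pk); rewrite negbK.
Qed.

Section Pattern.
Variables (F : finFieldType) (n : nat) (tau : rel 'I_n).
Hypothesis tauT : total_order tau.

Definition sub_tau (pi : rel 'I_n) := forall i j, i != j -> pi i j -> tau i j.
Definition tr_rel (pi : rel 'I_n) :=
  forall i k j, i != k -> k != j -> pi i k -> pi k j -> pi i j.

Definition rk (i : 'I_n) : nat := #|[set k | tau k i]|.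

Lemma rk_lt i j : i != j -> tau i j -> (rk i < rk j)%N.
Proof.
case: tauT => refl anti trans _ nij tij.
apply: proper_card; apply/properP; split.
  by apply/subsetP => k; rewrite !inE => tki; apply: (trans i).
exists j; rewrite !inE ?refl //; apply/negP => tji.
by move/eqP: nij; apply; apply: anti; rewrite tij tji.
Qed.

Lemma rk_le i : (rk i <= n)%N.
Proof. by rewrite /rk (leq_trans (max_card _)) ?card_ord. Qed.

Definition patP (pi : rel 'I_n) (X : 'M[F]_n) :=
  (forall i, X i i = 1) /\ (forall i j, i != j -> X i j != 0 -> pi i j).

Lemma id_entry i j : (1%:M : 'M[F]_n) i j = (i == j)%:R.
Proof. by rewrite mxE. Qed.

Lemma pat_unit (pi : rel 'I_n) (X : 'M[F]_n) : sub_tau pi -> patP pi X -> X \in unitmx.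
Proof.
move=> sp [d o].
pose N : 'M[F]_n := X - 1.
have Nii i : N i i = 0 by rewrite /N -idmxE !mxE d eqxx subrr.
have Nij i j : i != j -> N i j = X i j by move=> nij; rewrite /N -idmxE !mxE (negbTE nij) subr0.
have key : forall k i j, (N ^+ k) i j != 0 -> (rk i + k <= rk j)%N.
  elim=> [|k IH] i j.
    rewrite expr0 -idmxE id_entry; case: (eqVneq i j) => [->|_]; first by rewrite addn0.
    by rewrite eqxx.
  rewrite exprS -mulmxE mxE => /sum_neq0 [l _]; rewrite mulf_eq0 negb_or => /andP[a b].
  have nil : i != l by apply: contraNneq a => ->; rewrite Nii.
  have Xil : X i l != 0 by rewrite -Nij.
  have := IH _ _ b; have := rk_lt nil (sp _ _ nil (o _ _ nil Xil)).
  lia.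
have N0 : N ^+ n.+1 = 0.
  apply/matrixP => i j; rewrite [RHS]mxE; apply/eqP; apply: contraT => /key.
  have := rk_le j; lia.
have := subrX1 (- N) n.+1; rewrite exprNn N0 mulr0 sub0r -opprD /N subrK mulNr => e.
have : X *m (\sum_(i < n.+1) (- (X - 1)) ^+ i) = 1%:M.
  by rewrite mulmxE idmxE; apply: oppr_inj.
by case/mulmx1_unit.
Qed.

Lemma UTP (pi : rel 'I_n) (X : 'M[F]_n) : sub_tau pi -> reflect (patP pi X) (X \in UT F pi).
Proof.
move=> sp; rewrite inE; apply: (iffP and3P) => [[_ /forallP d /forallP o] | [d o]].
  split => [i|i j nij nz]; first exact/eqP/d.
  by have /forallP/(_ j)/implyP := o i; apply; rewrite nij nz.
split; first exact: (@pat_unit pi).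
  by apply/forallP => i; apply/eqP/d.
by apply/forallP => i; apply/forallP => j; apply/implyP => /andP[]; apply: o.
Qed.

Lemma patP0 (pi : rel 'I_n) (X : 'M[F]_n) i j : patP pi X -> i != j -> ~~ pi i j -> X i j = 0.
Proof. by case=> _ o nij npi; apply/eqP; apply: contraNT npi; apply: o. Qed.

Lemma UT_sub (pi pi' : rel 'I_n) (X : 'M[F]_n) : (forall i j, i != j -> pi i j -> pi' i j) ->
  X \in UT F pi -> X \in UT F pi'.
Proof.
move=> H; rewrite !inE => /and3P[u d /forallP o]; rewrite u d /=.
apply/forallP => i; apply/forallP => j; apply/implyP => /andP[nij nz].
by apply: H => //; have /forallP/(_ j)/implyP := o i; apply; rewrite nij nz.
Qed.

Lemma UT_ext (pi pi' : rel 'I_n) : (forall i j, i != j -> pi i j = pi' i j) -> UT F pi = UT F pi'.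
Proof.
by move=> H; apply/setP => X; apply/idP/idP; apply: UT_sub => i j nij; rewrite H.
Qed.

Lemma UT1 (pi : rel 'I_n) : sub_tau pi -> 1%:M \in UT F pi.
Proof.
move=> sp; apply/UTP => //; split => [i|i j nij]; rewrite id_entry ?eqxx //.
by rewrite (negbTE nij) eqxx.
Qed.

Lemma UT_mul (pi : rel 'I_n) (X Y : 'M[F]_n) : sub_tau pi -> tr_rel pi ->
  X \in UT F pi -> Y \in UT F pi -> X *m Y \in UT F pi.
Proof.
move=> sp tp /UTP-/(_ sp) [dX oX] /UTP-/(_ sp) [dY oY]; apply/UTP => //; split.
  move=> i; rewrite mxE (bigD1 i) //= dX dY mulr1 big1 ?addr0 // => k nki.
  apply/eqP; apply: contraT; rewrite mulf_eq0 negb_or => /andP[a b].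
  have nik : i != k by rewrite eq_sym.
  have := rk_lt nik (sp _ _ nik (oX _ _ nik a)).
  have := rk_lt nki (sp _ _ nki (oY _ _ nki b)); lia.
move=> i j nij; rewrite mxE => /sum_neq0 [k _]; rewrite mulf_eq0 negb_or => /andP[a b].
have [eik|nik] := eqVneq i k; first by subst k; apply: oY.
have [ekj|nkj] := eqVneq k j; first by subst k; apply: oX.
by apply: (tp i k j) => //; [apply: oX | apply: oY].
Qed.

Lemma UT_unit (pi : rel 'I_n) (X : 'M[F]_n) : sub_tau pi -> X \in UT F pi -> X \in unitmx.
Proof. by move=> sp; rewrite inE => /and3P[]. Qed.

Lemma UT_inv (pi : rel 'I_n) (X : 'M[F]_n) : sub_tau pi -> tr_rel pi -> X \in UT F pi -> invmx X \in UT F pi.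
Proof.
move=> sp tp XU; have u := UT_unit sp XU.
have inj : {in UT F pi &, injective (mulmx X)}.
  by move=> Y Z _ _ /(congr1 (mulmx (invmx X))); rewrite !mulKmx.
have sub : [set X *m Y | Y in UT F pi] \subset UT F pi.
  by apply/subsetP => _ /imsetP[Y YU ->]; apply: UT_mul.
have eqs : [set X *m Y | Y in UT F pi] = UT F pi.
  by apply/eqP; rewrite eqEcard sub (card_in_imset inj) leqnn.
have : 1%:M \in [set X *m Y | Y in UT F pi] by rewrite eqs UT1.
case/imsetP => Y YU e.
by rewrite -[invmx X]mulmx1 e mulKmx.
Qed.

Definition dmask (p : rel 'I_n) (X : 'M[F]_n) : 'M[F]_n :=
  \matrix_(i, j) if (i == j) || p i j then X i j else 0.

Lemma split_lem (pi p : rel 'I_n) :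
  sub_tau pi ->
  let P1 := UT F (fun i j => pi i j && p i j) in
  let P2 := UT F (fun i j => pi i j && ~~ p i j) in
  let h := fun yz : 'M[F]_n * 'M[F]_n => yz.1 + yz.2 - 1%:M in
  {in setX P1 P2 &, injective h} /\
  [set h yz | yz in setX P1 P2] = UT F pi /\
  (forall yz, yz \in setX P1 P2 -> dmask p (h yz) = yz.1).
Proof.
move=> sp P1 P2 h.
have sp1 : sub_tau (fun i j => pi i j && p i j) by move=> i j nij /andP[/sp->].
have sp2 : sub_tau (fun i j => pi i j && ~~ p i j) by move=> i j nij /andP[/sp->].
have hE yz i j : h yz i j = if i == j then yz.1 i j + yz.2 i j - 1 else yz.1 i j + yz.2 i j.
  by rewrite /h !mxE; case: eqP; rewrite ?subr0.
have m1 : forall yz, yz \in setX P1 P2 -> dmask p (h yz) = yz.1.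
  case=> y z; rewrite inE /= => /andP[/UTP-/(_ sp1) Hy /UTP-/(_ sp2) Hz].
  have [dy oy] := Hy; have [dz oz] := Hz.
  apply/matrixP => i j; rewrite mxE hE /=; case: eqP => [->|/eqP nij] /=.
    by rewrite dy dz addrK.
  case pij: (p i j).
    by rewrite (patP0 Hz nij) ?addr0 // pij andbF.
  by rewrite (patP0 Hy nij) // pij andbF.
have m2 : forall yz, yz \in setX P1 P2 -> dmask (fun i j => ~~ p i j) (h yz) = yz.2.
  case=> y z; rewrite inE /= => /andP[/UTP-/(_ sp1) Hy /UTP-/(_ sp2) Hz].
  have [dy oy] := Hy; have [dz oz] := Hz.
  apply/matrixP => i j; rewrite mxE hE /=; case: eqP => [->|/eqP nij] /=.
    by rewrite dy dz addrK.
  case pij: (p i j) => /=.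
    by rewrite (patP0 Hz nij) // pij andbF.
  by rewrite (patP0 Hy nij) ?add0r // pij andbF.
split; first by move=> a b aP bP e; apply/injective_projections; rewrite -?m1 -?m2 // e.
split=> //.
apply/eqP; rewrite eqEsubset; apply/andP; split.
  apply/subsetP => _ /imsetP[[y z] + ->]; rewrite inE /= => /andP[].
  move=> /UTP-/(_ sp1) [dy oy] /UTP-/(_ sp2) [dz oz].
  apply/UTP => //; split => [i|i j nij]; rewrite hE ?eqxx /=.
    by rewrite dy dz addrK.
  rewrite (negbTE nij); have [y0|/oy] := eqVneq (y i j) 0.
    by rewrite y0 add0r => /oz -/(_ nij) /andP[].
  by move=> /(_ nij) /andP[].
apply/subsetP => X XU; apply/imsetP.
have /UTP-/(_ sp) [dX oX] := XU.
exists (dmask p X, dmask (fun i j => ~~ p i j) X).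
  rewrite inE /=; apply/andP; split; apply/UTP => //; split => [i|i j nij];
    rewrite mxE ?eqxx ?dX // (negbTE nij) /=; case: ifP => pij; rewrite ?eqxx //;
    by move=> nz; rewrite (oX _ _ nij nz).
apply/matrixP => i j; rewrite hE /= !mxE; case: eqP => [->|_] /=.
  by rewrite dX addrK.
by case: (p i j); rewrite ?addr0 ?add0r.
Qed.

Lemma card_split (pi p : rel 'I_n) : sub_tau pi ->
  #|UT F pi| = (#|UT F (fun i j => pi i j && p i j)| * #|UT F (fun i j => pi i j && ~~ p i j)|)%N.
Proof.
move=> sp; have [inj [im _]] := split_lem p sp.
by rewrite -im card_in_imset // cardsX.
Qed.

Lemma sum_split (pi p : rel 'I_n) (f : 'M[F]_n -> algC) : sub_tau pi ->
  \sum_(x in UT F pi) f (dmask p x) =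
  #|UT F (fun i j => pi i j && ~~ p i j)|%:R *
    \sum_(y in UT F (fun i j => pi i j && p i j)) f y.
Proof.
move=> sp; have [inj [im m1]] := split_lem p sp.
rewrite -im big_imset //=.
rewrite (eq_bigr (fun yz => f yz.1)); last by move=> yz /m1 ->.
rewrite (eq_bigl (fun yz => (yz.1 \in UT F (fun i j => pi i j && p i j)) &&
                            (yz.2 \in UT F (fun i j => pi i j && ~~ p i j)))); last first.
  by move=> yz; rewrite inE.
rewrite -(pair_big_dep (fun y => y \in UT F (fun i j => pi i j && p i j))
  (fun _ z => z \in UT F (fun i j => pi i j && ~~ p i j)) (fun y _ => f y)) /= mulr_sumr.
by apply: eq_bigr => y _; rewrite sumr_const mulr_natl.
Qed.

End Pattern.


Section SeqLemmas.
Variable n : nat.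
Implicit Types (C : seq {set 'I_n}) (J : {set 'I_n}) (i j : 'I_n).

Lemma in_bigcup_seq C i : (i \in \bigcup_(a <- C) a) = has (fun a : {set 'I_n} => i \in a) C.
Proof. by elim: C => [|c C IH]; rewrite ?big_nil ?big_cons ?in_set0 // in_setU IH. Qed.

Lemma crestr_cons c C J : crestr (c :: C) J =
  if c :&: J != set0 then (c :&: J) :: crestr C J else crestr C J.
Proof. by rewrite /crestr /=; case: ifP. Qed.

Lemma eqrel_crestr C J i j :
  eqrel (crestr C J) i j = [&& i \in J, j \in J & eqrel C i j].
Proof.
rewrite /eqrel; elim: C => [|c C IH]; first by rewrite /= !andbF.
rewrite crestr_cons /=; case: ifP => nz /=; rewrite IH ?inE.
  by case: (i \in J); case: (j \in J); case: (i \in c); case: (j \in c).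
case ic: (i \in c) => //=; case iJ: (i \in J) => //=.
move/negbT: nz; rewrite negbK => /eqP e; have : i \in c :&: J by rewrite inE ic iJ.
by rewrite e inE.
Qed.

Lemma eqrel_tits B A i j : eqrel (tits B A) i j = eqrel B i j && eqrel A i j.
Proof.
rewrite /tits; elim: B => [|b B IH] //=.
rewrite {1}/eqrel has_cat -/(eqrel (crestr A b) i j) -/(eqrel (flatten _) i j) IH eqrel_crestr /eqrel.
by case: (i \in b); case: (j \in b); case: (has _ A); case: (has _ B).
Qed.

Fixpoint ascs C i j : bool :=
  if C is c :: C' then ((i \in c) && has (fun d : {set 'I_n} => j \in d) C') || ascs C' i j
  else false.

Lemma ascrelP C i j : reflect (exists r s, [/\ (r < s)%N, i \in nth set0 C r & j \in nth set0 C s])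
  (ascrel C i j).
Proof.
apply: (iffP existsP) => [[r /existsP [s /and3P[lt ir js]]] | [r [s [lt ir js]]]].
  by exists r, s.
have sC : (s < size C)%N by rewrite ltnNge; apply/negP => /(nth_default set0) e; rewrite e inE in js.
have rC : (r < size C)%N by apply: ltn_trans sC.
by exists (Ordinal rC); apply/existsP; exists (Ordinal sC); rewrite /= lt ir js.
Qed.

Lemma ascsP C i j : reflect (exists r s, [/\ (r < s)%N, i \in nth set0 C r & j \in nth set0 C s])
  (ascs C i j).
Proof.
elim: C => [|c C IH] /=.
  by apply: ReflectF => [[r [s [_ ir _]]]]; rewrite nth_nil inE in ir.
apply: (iffP orP) => [[/andP[ic /(has_nthP set0) [s _ js]] | /IH [r [s [lt ir js]]]] | ].
- by exists 0%N, s.+1.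
- by exists r.+1, s.+1.
case=> [[|r] [[|s] [//= lt ir js]]].
  by left; rewrite ir /=; apply/(has_nthP set0); exists s => //; rewrite ltnNge;
     apply/negP => /(nth_default set0) e; rewrite e inE in js.
by right; apply/IH; exists r, s.
Qed.

Lemma ascrel_ascs C i j : ascrel C i j = ascs C i j.
Proof. by apply/ascrelP/ascsP. Qed.

Lemma has_crestr C J j : j \in J ->
  has (fun d : {set 'I_n} => j \in d) (crestr C J) = has (fun d : {set 'I_n} => j \in d) C.
Proof.
move=> jJ; elim: C => [|c C IH] //=; rewrite crestr_cons; case: ifP => nz /=.
  by rewrite inE jJ andbT IH.
rewrite IH; case jc: (j \in c) => //=.
move/negbT: nz; rewrite negbK => /eqP e; have : j \in c :&: J by rewrite inE jc jJ.
by rewrite e inE.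
Qed.

Lemma ascrel_crestr C J i j : i \in J -> j \in J ->
  ascrel (crestr C J) i j = ascrel C i j.
Proof.
move=> iJ jJ; rewrite !ascrel_ascs; elim: C => [|c C IH] //=.
rewrite crestr_cons; case: ifP => nz /=.
  by rewrite inE iJ andbT has_crestr // IH.
rewrite IH; case ic: (i \in c) => //=.
move/negbT: nz; rewrite negbK => /eqP e; have : i \in c :&: J by rewrite inE ic iJ.
by rewrite e inE.
Qed.

End SeqLemmas.

Section Blocks.
Variables (n : nat) (A : seq {set 'I_n}).
Hypothesis Asc : is_setcomp [set: 'I_n] A.

Definition bidx (i : 'I_n) : nat := find (fun a : {set 'I_n} => i \in a) A.

Lemma Adis : pairwise (fun a b : {set 'I_n} => [disjoint a & b]) A.
Proof. by case/and3P: Asc. Qed.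

Lemma has_bidx i : has (fun a : {set 'I_n} => i \in a) A.
Proof. by case/and3P: Asc => _ _ /eqP cov; rewrite -in_bigcup_seq cov inE. Qed.

Lemma bidx_lt i : (bidx i < size A)%N.
Proof. by rewrite /bidx -has_find has_bidx. Qed.

Lemma mem_bidx i : i \in nth set0 A (bidx i).
Proof. exact: (nth_find set0 (has_bidx i)). Qed.

Lemma nth_blk_uniq r s i : i \in nth set0 A r -> i \in nth set0 A s -> r = s.
Proof.
have lt_sz t : i \in nth set0 A t -> (t < size A)%N.
  by move=> it; rewrite ltnNge; apply/negP => /(nth_default set0) e; rewrite e inE in it.
move=> ir js; have rA := lt_sz _ ir; have sA := lt_sz _ js.
have /(pairwiseP set0) H := Adis.
case: (ltngtP r s) => // lt.
  by have := H r s rA sA lt => /disjointFr -/(_ _ ir); rewrite js.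
by have := H s r sA rA lt => /disjointFr -/(_ _ js); rewrite ir.
Qed.

Lemma bidx_nth r i : i \in nth set0 A r -> r = bidx i.
Proof. by move=> ir; apply: nth_blk_uniq ir (mem_bidx i). Qed.

Lemma eqrel_bidx i j : eqrel A i j = (bidx i == bidx j).
Proof.
apply/idP/eqP => [/hasP[a aA /andP[ia ja]] | e].
  rewrite -(nth_index set0 aA) in ia ja.
  by rewrite -(bidx_nth ia) -(bidx_nth ja).
apply/hasP; exists (nth set0 A (bidx i)); first exact/mem_nth/bidx_lt.
by rewrite mem_bidx e mem_bidx.
Qed.

Lemma ascrel_bidx i j : ascrel A i j = (bidx i < bidx j)%N.
Proof.
apply/ascrelP/idP => [[r [s [lt ir js]]] | lt].
  by rewrite -(bidx_nth ir) -(bidx_nth js).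
by exists (bidx i), (bidx j); rewrite lt !mem_bidx.
Qed.

Lemma eqrel_refl i : eqrel A i i.
Proof. by rewrite eqrel_bidx. Qed.

Lemma eqrel_sym i j : eqrel A i j = eqrel A j i.
Proof. by rewrite !eqrel_bidx eq_sym. Qed.

Lemma blk_same J i j : J \in A -> i \in J -> (j \in J) = eqrel A i j.
Proof.
move=> JA iJ; rewrite eqrel_bidx; rewrite -(nth_index set0 JA) in iJ *.
rewrite -(bidx_nth iJ); apply/idP/eqP => [jJ | ->]; first by rewrite -(bidx_nth jJ).
exact: mem_bidx.
Qed.

End Blocks.


Section InflD.
Variables (F : finFieldType) (n : nat) (tau : rel 'I_n) (A : seq {set 'I_n}).
Hypotheses (tauT : total_order tau) (Asc : is_setcomp [set: 'I_n] A)
  (AscT : forall i j, ascrel A i j -> tau i j).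

Local Notation eqA := (eqrel A).

Lemma tau_bidx i j : tau i j -> (bidx A i <= bidx A j)%N.
Proof.
move=> tij; rewrite leqNgt; apply/negP => lt.
have tji : tau j i by apply: AscT; rewrite (ascrel_bidx Asc).
case: tauT => _ anti _ _; have e := anti i j; rewrite tij tji in e.
by rewrite (e isT) ltnn in lt.
Qed.

Definition bu (X : 'M[F]_n) := forall i j, X i j != 0 -> (bidx A i <= bidx A j)%N.

Lemma bu_UT (pi : rel 'I_n) X : sub_tau tau pi -> X \in UT F pi -> bu X.
Proof.
move=> sp /(UTP tauT _ sp) [d o] i j nz; have [->|nij] := eqVneq i j => //.
exact: tau_bidx (sp _ _ nij (o _ _ nij nz)).
Qed.

Lemma dmask_eqE (X : 'M[F]_n) i j :
  dmask eqA X i j = if bidx A i == bidx A j then X i j else 0.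
Proof.
rewrite mxE -(eqrel_bidx Asc); case: eqP => [->|] /=; first by rewrite (eqrel_refl Asc).
by [].
Qed.

Lemma dmask_mul X Y : bu X -> bu Y -> dmask eqA (X *m Y) = dmask eqA X *m dmask eqA Y.
Proof.
move=> bX bY; apply/matrixP => i j; rewrite dmask_eqE !mxE.
case: eqP => e.
  apply: eq_bigr => k _; rewrite !dmask_eqE; case: eqP => eik.
    by rewrite -eik e eqxx.
  rewrite mul0r; have [->|nzX] := eqVneq (X i k) 0; first by rewrite mul0r.
  have [->|nzY] := eqVneq (Y k j) 0; first by rewrite mulr0.
  by have := bX _ _ nzX; have := bY _ _ nzY; lia.
rewrite big1 // => k _; rewrite !dmask_eqE; case: eqP => eik; last by rewrite mul0r.
by case: eqP => ekj; [lia | rewrite mulr0].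
Qed.

Section Sig.
Variable sigma : rel 'I_n.
Hypotheses (sig_sub : sub_tau tau sigma)
  (sig_tr : forall i k j, sigma i k -> sigma k j -> sigma i j).

Let piL := fun i j => sigma i j && eqA i j.
Let piR := fun i j => (i == j) || sigma i j && ascrel A i j.

Lemma spL : sub_tau tau piL.
Proof. by move=> i j nij /andP[/(sig_sub nij)]. Qed.
Lemma spR : sub_tau tau piR.
Proof. by move=> i j nij; rewrite /piR (negbTE nij) /= => /andP[/(sig_sub nij)]. Qed.
Lemma trL : tr_rel piL.
Proof.
move=> i k j _ _ /andP[sik eik] /andP[skj ekj]; rewrite /piL (sig_tr sik skj) /=.
by move: eik ekj; rewrite !(eqrel_bidx Asc) => /eqP -> .
Qed.
Lemma trS : tr_rel sigma.
Proof. by move=> i k j _ _; apply: sig_tr. Qed.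

Lemma dmask_L X : X \in UT F piL -> dmask eqA X = X.
Proof.
move=> /(UTP tauT _ spL) H; apply/matrixP => i j; rewrite dmask_eqE; case: eqP => // e.
have nij : i != j by apply: contra_notN e => /eqP ->.
rewrite (patP0 H nij) // /piL (eqrel_bidx Asc); apply/nandP; right; exact/eqP.
Qed.

Lemma dmask_R Y : Y \in UT F piR -> dmask eqA Y = 1%:M.
Proof.
move=> /(UTP tauT _ spR) H; have [d o] := H; apply/matrixP => i j; rewrite dmask_eqE id_entry.
have [->|nij] := eqVneq i j; first by rewrite eqxx d.
case: eqP => // e; rewrite (patP0 H nij) //.
by rewrite /piR (negbTE nij) /= (ascrel_bidx Asc) e ltnn andbF.
Qed.

Lemma infl_d (psi : cfun F n) g : g \in UT F sigma ->
  infl (UT F piL) (UT F piR) psi g = psi (dmask eqA g).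
Proof.
move=> gS; rewrite /infl.
set l := dmask eqA g.
have lL : l \in UT F piL.
  have /(UTP tauT _ sig_sub) [d o] := gS.
  apply/(UTP tauT _ spL); split => [i|i j nij]; rewrite dmask_eqE.
    by rewrite eqxx d.
  case: ifP => e; last by rewrite eqxx.
  by move=> nz; rewrite /piL (o _ _ nij nz) (eqrel_bidx Asc) e.
have lu : l \in unitmx := UT_unit spL lL.
case: pickP => [[l' r] /= /and3P[l'L rR /eqP e] | none].
  congr psi; rewrite /l -e dmask_mul ?(dmask_L l'L) ?(dmask_R rR) ?mulmx1 //.
    exact: bu_UT spL l'L.
  exact: bu_UT spR rR.
exfalso; have := none (l, invmx l *m g); rewrite /= lL mulKVmx // eqxx andbT => /negP; apply.
have ilL : invmx l \in UT F piL by apply: (UT_inv tauT) spL trL lL.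
have ilS : invmx l \in UT F sigma by apply: UT_sub ilL => i j _ /andP[].
have rS : invmx l *m g \in UT F sigma by apply: (UT_mul tauT) sig_sub trS ilS gS.
have mr : dmask eqA (invmx l *m g) = 1%:M.
  rewrite dmask_mul; first by rewrite dmask_L // -/l mulVmx.
    exact: bu_UT spL ilL.
  exact: bu_UT sig_sub gS.
have /(UTP tauT _ sig_sub) [d o] := rS.
apply/(UTP tauT _ spR); split => // i j nij nz.
rewrite /piR (negbTE nij) (o _ _ nij nz) /= (ascrel_bidx Asc) ltn_neqAle.
rewrite (tau_bidx (sig_sub nij (o _ _ nij nz))) andbT.
apply/eqP => e; have := congr1 (fun M : 'M[F]_n => M i j) mr; rewrite dmask_eqE e eqxx id_entry (negbTE nij).
by move/eqP; rewrite (negbTE nz).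
Qed.

End Sig.
End InflD.


Lemma sum_eq1 (F : finFieldType) n (S : {set 'M[F]_n}) x0 :
  \sum_(x in S) (x == x0)%:R = (x0 \in S)%:R :> algC.
Proof.
case: (boolP (x0 \in S)) => H.
  by rewrite (bigD1 x0) //= eqxx big1 ?addr0 // => x /andP[_ /negbTE ->].
by rewrite big1 // => x xS; case: eqP => // e; subst; rewrite xS in H.
Qed.

Lemma prod_bool (I : Type) (s : seq I) (b : I -> bool) :
  \prod_(J <- s) (b J)%:R = (all b s)%:R :> algC.
Proof.
elim: s => [|x s IH]; rewrite ?big_nil ?big_cons //= IH.
by case: (b x); rewrite ?mul1r ?mul0r.
Qed.

Section Main.
Variables (F : finFieldType) (n : nat) (tau : rel 'I_n) (A B : seq {set 'I_n}).
Hypotheses (tauT : total_order tau) (Asc : is_setcomp [set: 'I_n] A)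
  (Bsc : is_setcomp [set: 'I_n] B) (AscT : forall i j, ascrel A i j -> tau i j).

Local Notation eqA := (eqrel A).
Local Notation M := 'M[F]_n.

Lemma tau_tr i k j : tau i k -> tau k j -> tau i j.
Proof. by case: tauT => _ _ tr _ ?; apply: tr. Qed.

Lemma stt : sub_tau tau tau. Proof. by []. Qed.
Lemma stand (p : rel 'I_n) : sub_tau tau (fun i j => tau i j && p i j).
Proof. by move=> i j _ /andP[]. Qed.

Lemma blk_entry (J : {set 'I_n}) (X : M) i j :
  blk J X i j = if (i \in J) && (j \in J) then X i j else (i == j)%:R.
Proof. by rewrite mxE. Qed.

Lemma srr J : sub_tau tau (rrestr tau J).
Proof. by move=> i j _ /and3P[]. Qed.
Lemma trr J i k j : rrestr tau J i k -> rrestr tau J k j -> rrestr tau J i j.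
Proof.
by case/and3P => tik iJ _ /and3P[tkj _ jJ]; rewrite /rrestr (tau_tr tik tkj) iJ jJ.
Qed.

Lemma blk_UT (J : {set 'I_n}) (X : M) : X \in UT F tau -> blk J X \in UT F (rrestr tau J).
Proof.
move=> /(UTP tauT _ stt) [d o]; apply/(UTP tauT _ (@srr J)); split => [i|i j nij];
  rewrite blk_entry.
  by case: ifP => _; rewrite ?d ?eqxx.
case: ifP => [/andP[iJ jJ] nz | _]; last by rewrite (negbTE nij) eqxx.
by rewrite /rrestr (o _ _ nij nz) iJ jJ.
Qed.

Lemma dmask_blk (J : {set 'I_n}) (X : M) : dmask eqA (blk J X) = blk J (dmask eqA X).
Proof.
apply/matrixP => i j; rewrite (dmask_eqE Asc) !blk_entry (dmask_eqE Asc).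
case: ((i \in J) && (j \in J)) => //.
have [->|nij] := eqVneq i j; first by rewrite !eqxx.
by case: ifP.
Qed.

Lemma sum_delta_r (f : 'I_n -> F) j : \sum_k f k * (k == j)%:R = f j.
Proof.
by rewrite (bigD1 j) //= eqxx mulr1 big1 ?addr0 // => k /negbTE ->; rewrite mulr0.
Qed.
Lemma sum_delta_l (f : 'I_n -> F) i : \sum_k (i == k)%:R * f k = f i.
Proof.
rewrite (bigD1 i) //= eqxx mul1r big1 ?addr0 // => k; rewrite eq_sym => /negbTE ->.
by rewrite mul0r.
Qed.

Lemma blk_mul (J : {set 'I_n}) (X Y : M) : (forall i k, i \in J -> k \notin J -> X i k = 0) ->
  blk J (X *m Y) = blk J X *m blk J Y.
Proof.
move=> H; apply/matrixP => i j; rewrite blk_entry [RHS]mxE.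
case iJ: (i \in J) => /=; last first.
  under eq_bigr => k _ do rewrite !blk_entry iJ /=.
  by rewrite sum_delta_l iJ.
case jJ: (j \in J) => /=; last first.
  under eq_bigr => k _ do rewrite !blk_entry iJ jJ andbF /=.
  by rewrite sum_delta_r jJ.
rewrite mxE; apply: eq_bigr => k _; rewrite !blk_entry iJ jJ /=; case kJ: (k \in J) => //.
rewrite H ?kJ //; have -> : (i == k) = false by apply/eqP => e; subst; rewrite iJ in kJ.
by rewrite !mul0r.
Qed.

Lemma all_blk_eq (X Y : M) :
  (forall i j, ~~ eqrel B i j -> X i j = 0) -> (forall i j, ~~ eqrel B i j -> Y i j = 0) ->
  all (fun J => blk J X == blk J Y) B = (X == Y).
Proof.
move=> HX HY; apply/allP/eqP => [H | ->]; last by move=> J _.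
apply/matrixP => i j; case e: (eqrel B i j); last by rewrite HX ?HY ?e.
move: e => /hasP [J JB /andP[iJ jJ]].
have := H J JB => /eqP /(congr1 (fun N : M => N i j)); by rewrite !blk_entry iJ jJ.
Qed.

Let Q := UT F (fun i j => [&& tau i j, ascrel B i j & eqrel A i j]).

Lemma UL_crestr J : UL F (rrestr tau J) (crestr A J) = UT F (fun i j => rrestr tau J i j && eqA i j).
Proof.
apply: UT_ext => i j _; rewrite eqrel_crestr /rrestr.
by case: (tau i j); case: (i \in J); case: (j \in J).
Qed.

Lemma UR_crestr (C : seq {set 'I_n}) J : UR F (rrestr tau J) (crestr C J) =
  UT F (fun i j => (i == j) || rrestr tau J i j && ascrel C i j).
Proof.
apply: UT_ext => i j _; rewrite /rrestr; case: (i == j) => //=.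
case iJ: (i \in J); case jJ: (j \in J); rewrite ?andbF ?andbT //=.
by rewrite ascrel_crestr.
Qed.

Lemma LHS_eq (psi : cfun F n) h : h \in UL F tau B ->
  resf (UR F tau B) (infl (UL F tau A) (UR F tau A) psi) h =
  (#|Q|%:R)^-1 * \sum_(y in Q) psi (dmask eqA h *m y).
Proof.
move=> hB.
have hT : h \in UT F tau by apply: UT_sub hB => i j _ /andP[].
have trt : tr_rel tau by move=> i k j _ _; apply: tau_tr.
pose piB := fun i j : 'I_n => (i == j) || tau i j && ascrel B i j.
have spB : sub_tau tau piB by move=> i j nij; rewrite /piB (negbTE nij) => /andP[].
rewrite /resf /UL /UR -/piB.
have e1 : forall x, x \in UT F piB ->
    infl (UT F (fun i j => tau i j && eqA i j))
         (UT F (fun i j => (i == j) || tau i j && ascrel A i j)) psi (h *m x) =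
    psi (dmask eqA h *m dmask eqA x).
  move=> x xB.
  have xT : x \in UT F tau by apply: UT_sub xB => i j nij; rewrite /piB (negbTE nij) => /andP[].
  rewrite (infl_d tauT Asc AscT stt tau_tr) ?(UT_mul tauT stt trt) //.
  by rewrite (dmask_mul Asc) //; apply: (bu_UT tauT Asc AscT stt).
rewrite (eq_bigr _ e1) (sum_split tauT _ (fun y => psi (dmask eqA h *m y)) spB).
rewrite (card_split F tauT (eqrel A) spB).
have -> : UT F (fun i j => piB i j && eqA i j) = Q.
  apply: UT_ext => i j nij; rewrite /piB (negbTE nij) /=.
  by case: (tau i j); case: (ascrel B i j).
set c2 := #|UT F _|.
have c2n0 : c2%:R != 0 :> algC.
  rewrite pnatr_eq0 -lt0n; apply/card_gt0P; exists 1%:M; apply: (UT1 F tauT).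
  by move=> i j nij /andP[/spB ->].
by rewrite natrM invfM -!mulrA [X in _ * X]mulrA mulVf // mul1r.
Qed.

Lemma card_blocks_gen (S : seq {set 'I_n}) :
  pairwise (fun a b : {set 'I_n} => [disjoint a & b]) S ->
  #|UT F (fun i j => [&& tau i j, ascrel B i j & has (fun c : {set 'I_n} => (i \in c) && (j \in c)) S])| =
  (\prod_(J <- S) #|UT F (fun i j => (i == j) || rrestr tau J i j && ascrel B i j)|)%N.
Proof.
elim: S => [|c S IH] /=.
  move=> _; rewrite big_nil.
  have -> : UT F (fun i j => [&& tau i j, ascrel B i j & false]) = [set 1%:M].
    apply/setP => X; rewrite in_set1; apply/idP/eqP => [XU | ->]; last first.
      by apply: (UT1 F tauT) => i j _ /and3P[].
    have /(UTP tauT _ (@stand _)) H := XU; have [d o] := H.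
    apply/matrixP => i j; rewrite id_entry; have [->|nij] := eqVneq i j; first by rewrite d.
    by rewrite (patP0 H nij) // !andbF.
  by rewrite cards1.
move=> /andP[/allP dc dS]; rewrite big_cons -IH //.
rewrite [LHS](card_split F tauT (fun i j => (i \in c) && (j \in c))); last first.
  by move=> i j _ /and3P[].
congr (_ * _)%N; apply: (congr1 (fun S : {set M} => #|S|)); apply: UT_ext => i j nij /=.
  rewrite (negbTE nij) /rrestr /=.
  by case: (tau i j); case: (ascrel B i j); case: (i \in c); case: (j \in c); rewrite ?andbF.
case ic: (i \in c); case jc: (j \in c); rewrite ?andbF ?andbT //=.
apply/esym/negbTE/and3P => [[_ _ /hasP[d dS0 /andP[id jd]]]].
by have := dc d dS0 => /disjointFr -/(_ _ ic); rewrite id.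
Qed.

Lemma card_blocks :
  (\prod_(J <- A) #|UT F (fun i j => (i == j) || rrestr tau J i j && ascrel B i j)|)%N = #|Q|.
Proof. by rewrite card_blocks_gen //; apply: (Adis Asc). Qed.

Lemma all_Q (z : M) : z \in UL F tau A ->
  all (fun J => blk J z \in UT F (fun i j => (i == j) || rrestr tau J i j && ascrel B i j)) A =
  (z \in Q).
Proof.
have spJ J : sub_tau tau (fun i j => (i == j) || rrestr tau J i j && ascrel B i j).
  by move=> i j nij; rewrite (negbTE nij) /= => /andP[/and3P[]].
have spQ : sub_tau tau (fun i j => [&& tau i j, ascrel B i j & eqrel A i j]).
  by move=> i j _ /and3P[].
move=> /(UTP tauT _ (@stand _)) [dz oz].
apply/allP/idP => [H | zQ J JA].
  apply/(UTP tauT _ spQ); split => // i j nij nz.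
  have /andP[tij eA] := oz _ _ nij nz; have := eA => /hasP [J JA /andP[iJ jJ]].
  have /(UTP tauT _ (spJ J)) [_ o'] := H J JA.
  have := o' i j nij; rewrite blk_entry iJ jJ => /(_ nz).
  by rewrite /= (negbTE nij) /rrestr tij iJ jJ /= => ->; rewrite eA.
apply/(UTP tauT _ (spJ J)); split => [i|i j nij]; rewrite blk_entry.
  by case: ifP => _; rewrite ?dz ?eqxx.
case: ifP => [/andP[iJ jJ] nz | _]; last by rewrite (negbTE nij) eqxx.
have /(UTP tauT _ spQ) [_ oq] := zQ.
by case/and3P: (oq _ _ nij nz) => t a _; rewrite (negbTE nij) /rrestr t iJ jJ a.
Qed.


Lemma RHS_eq (psi : cfun F n) h : h \in UL F tau B ->
  tensor_map B
      (fun J => infl (UL F (rrestr tau J) (crestr A J))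
                     (UR F (rrestr tau J) (crestr A J)))
      (UL F tau (tits B A))
      (tensor_map A
         (fun J => resf (UR F (rrestr tau J) (crestr B J)))
         (UL F tau A) psi)
      h =
  (#|Q|%:R)^-1 * \sum_(y in Q) psi (dmask eqA h *m y).
Proof.
move=> hB.
have trt : tr_rel tau by move=> i k j _ _; apply: tau_tr.
have hT : h \in UT F tau by apply: UT_sub hB => i j _ /andP[].
have /(UTP tauT _ (@stand _)) [dh oh] := hB.
set h' := dmask eqA h.
have spT : sub_tau tau (fun i j => tau i j && eqrel (tits B A) i j) by apply: stand.
have h'L : h' \in UL F tau (tits B A).
  apply/(UTP tauT _ spT); split => [i|i j nij]; rewrite /h' (dmask_eqE Asc) ?eqxx ?dh //.
  case: ifP => e nz; last by rewrite eqxx in nz.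
  have /andP[t eB] := oh _ _ nij nz.
  by rewrite t eqrel_tits eB (eqrel_bidx Asc) e.
have h'A : h' \in UL F tau A.
  by apply: UT_sub h'L => i j _ /andP[-> ]; rewrite eqrel_tits => /andP[].
have trA : tr_rel (fun i j => tau i j && eqA i j).
  move=> i k j _ _ /andP[tik eik] /andP[tkj ekj]; rewrite (tau_tr tik tkj) /=.
  by move: eik ekj; rewrite !(eqrel_bidx Asc) => /eqP ->.
have h'u : h' \in unitmx := UT_unit (@stand _) h'A.
have E4 : forall g, g \in UL F tau (tits B A) ->
    \prod_(J <- B) infl (UL F (rrestr tau J) (crestr A J)) (UR F (rrestr tau J) (crestr A J))
       (delta (blk J g)) (blk J h) = (h' == g)%:R.
  move=> g gL.
  rewrite (eq_bigr (fun J => (blk J h' == blk J g)%:R)); last first.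
    move=> J _; rewrite UL_crestr UR_crestr.
    rewrite (infl_d tauT Asc AscT (@srr J) (@trr J)); last exact: blk_UT.
    by rewrite /delta dmask_blk.
  rewrite prod_bool all_blk_eq // => i j neB.
    have nij : i != j by apply: contraNneq neB => ->; apply: eqrel_refl.
    by rewrite (patP0 (UTP tauT _ spT h'L) nij) // eqrel_tits (negbTE neB) andbF.
  have nij : i != j by apply: contraNneq neB => ->; apply: eqrel_refl.
  by rewrite (patP0 (UTP tauT _ spT gL) nij) // eqrel_tits (negbTE neB) andbF.
rewrite {1}/tensor_map.
rewrite (eq_bigr (fun g => (h' == g)%:R * tensor_map A
         (fun J => resf (UR F (rrestr tau J) (crestr B J))) (UL F tau A) psi g)); last first.
  by move=> g gL; rewrite E4.
rewrite (bigD1 h') //= eqxx mul1r big1 ?addr0; last first.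
  by move=> g /andP[_ ng]; rewrite eq_sym (negbTE ng) mul0r.
rewrite /tensor_map.
pose R' J := UT F (fun i j => (i == j) || rrestr tau J i j && ascrel B i j).
have spR J : sub_tau tau (fun i j => (i == j) || rrestr tau J i j && ascrel B i j).
  by move=> i j nij; rewrite (negbTE nij) /= => /andP[/and3P[]].
have E5 : forall g, g \in UL F tau A ->
    \prod_(J <- A) resf (UR F (rrestr tau J) (crestr B J)) (delta (blk J g)) (blk J h') =
    (#|Q|%:R)^-1 * (invmx h' *m g \in Q)%:R.
  move=> g gA; set z := invmx h' *m g.
  have zA : z \in UL F tau A.
    exact: (UT_mul tauT (@stand _) trA (UT_inv tauT (@stand _) trA h'A) gA).
  rewrite (eq_big_seq (fun J => (#|R' J|%:R)^-1 * (blk J z \in R' J)%:R)); last first.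
    move=> J JA; rewrite /resf UR_crestr -/(R' J); congr (_ * _); rewrite /delta.
    have bu : blk J h' \in unitmx by apply: (UT_unit (@srr J)); apply: blk_UT; apply: UT_sub h'A => i j _ /andP[].
    have e : blk J g = blk J h' *m blk J z.
      rewrite -blk_mul /z ?mulKVmx // => i k iJ kJ.
      have nik : i != k by apply: contraNneq kJ => <-.
      rewrite (patP0 (UTP tauT _ (@stand _) h'A) nik) //.
      by rewrite -(@blk_same _ _ Asc J i k JA iJ) (negbTE kJ) andbF.
    under eq_bigr => x _ do rewrite e (inj_eq (can_inj (mulKmx bu))).
    exact: sum_eq1.
  rewrite big_split /= prodfV -natr_prod prod_bool.
  by rewrite /R' card_blocks all_Q.
rewrite (eq_bigr (fun g => (#|Q|%:R)^-1 * ((invmx h' *m g \in Q)%:R * psi g))); last first.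
  by move=> g gA; rewrite E5 // mulrA.
rewrite -mulr_sumr; congr (_ * _).
have inj : {in Q &, injective (mulmx h')}.
  by move=> y1 y2 _ _ /(congr1 (mulmx (invmx h'))); rewrite !mulKmx.
rewrite -(big_imset _ inj) big_mkcond [RHS]big_mkcond; apply: eq_bigr => g _.
have -> : (g \in [set h' *m y | y in Q]) = (g \in UL F tau A) && (invmx h' *m g \in Q).
  apply/imsetP/andP => [[y yQ ->] | [gA zQ]]; last first.
    by exists (invmx h' *m g); rewrite ?mulKVmx.
  rewrite mulKmx // yQ; split => //.
  apply: (UT_mul tauT) (@stand _) trA h'A _.
  by apply: UT_sub yQ => i j _ /and3P[-> _ ->].
by case: (g \in UL F tau A); case: (_ \in Q); rewrite ?mul1r ?mul0r.
Qed.

End Main.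


Theorem proposition4p11 (F : finFieldType) (n : nat) (tau : rel 'I_n)
    (A B : seq {set 'I_n}) :
  total_order tau ->
  is_setcomp [set: 'I_n] A -> is_setcomp [set: 'I_n] B ->
  (forall i j, ascrel A i j -> tau i j) ->
  forall psi : cfun F n, is_classfun (UL F tau A) psi ->
  forall h, h \in UL F tau B ->
    resf (UR F tau B) (infl (UL F tau A) (UR F tau A) psi) h =
    tensor_map B
      (fun J => infl (UL F (rrestr tau J) (crestr A J))
                     (UR F (rrestr tau J) (crestr A J)))
      (UL F tau (tits B A))
      (tensor_map A
         (fun J => resf (UR F (rrestr tau J) (crestr B J)))
         (UL F tau A) psi)
      h.
Proof.
move=> tauT Asc Bsc AscT psi _ h hB.
by rewrite (LHS_eq tauT Asc AscT psi hB) (RHS_eq tauT Asc Bsc AscT psi hB).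
Qed.
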